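(* Let $G=(V,A)$ and $\mathfrak n=\mathfrak n(G)$ be as below. If $\omega=\sum_{e\in V,\alpha\in A}\lambda_{e,\alpha}\,e\wedge\alpha\in(W\wedge\mathfrak z)^{\mathfrak n}$, then $\lambda_{e,\alpha}=0$ for every $\alpha\in A$ and every vertex $e$ with $|e|\ge 2$.
   Context: $G=(V,A)$ is a finite simple graph without loops and without isolated vertices, with vertices $V=\{e_1,\dots,e_n\}$ ordered; each edge $\alpha$ joining $e_i,e_j$ with $i<j$ is oriented from $e_i$ to $e_j$. The graph algebra $\mathfrak n(G)$ over a field $k$ of characteristic zero has basis $V\cup A$ with $[e_i,e_j]=\alpha$ if $\alpha$ goes from $e_i$ to $e_j$, $[e_i,e_j]=0$ if $e_i,e_j$ are not adjacent, and all edges central; $\mathfrak z=\mathrm{span}(A)$ is its center and $W=\mathrm{span}(V)$. $|e|$ is the degree of $e$. Invariants are with respect to $\mathrm{ad}_x(a\wedge b)=[x,a]\wedge b+a\wedge[x,b]$. *)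

(* Defs.v *)
From HB Require Import structures.
From mathcomp Require Import all_boot all_order all_algebra.
Set Implicit Arguments. Unset Strict Implicit. Unset Printing Implicit Defensive.
Import Order.TTheory GRing.Theory Num.Theory.
Local Open Scope ring_scope.

Definition simple_graph (n : nat) (adj : rel 'I_n) : Prop :=
  (forall i, ~~ adj i i) /\ (forall i j, adj i j = adj j i).

Definition no_isolated (n : nat) (adj : rel 'I_n) : Prop :=
  forall i, exists j, adj i j.

Definition degree (n : nat) (adj : rel 'I_n) (i : 'I_n) : nat :=
  #|[set j | adj i j]|.

(* Edges: an edge joining e_i, e_j with i < j, oriented from e_i to e_j,
   is the pair (i, j). *)
Definition edgeT (n : nat) (adj : rel 'I_n) : finType :=
  {p : 'I_n * 'I_n | ((p.1 < p.2)%N && adj p.1 p.2)}.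

(* Basis V ∪ A of the graph algebra n(G). *)
Definition basisT (n : nat) (adj : rel 'I_n) : finType :=
  ('I_n + edgeT adj)%type.

Section GraphAlgebra.
Variables (K : fieldType) (n : nat) (adj : rel 'I_n).
Local Notation B := (basisT adj).

(* Vectors of n(G) are coordinate functions on the basis. *)
Definition delta (b : B) : B -> K := fun d => if d == b then 1 else 0.

(* Bracket of basis elements: [e_i,e_j] = alpha if alpha goes from e_i to e_j,
   [e_i, e_j] = -alpha if alpha goes from e_j to e_i, 0 otherwise;
   edges are central. *)
Definition brB (b c : B) : B -> K :=
  match b, c with
  | inl i, inl j => fun d =>
      match d with
      | inr a => if val a == (i, j) then 1
                 else if val a == (j, i) then -1 else 0
      | inl _ => 0
      end
  | _, _ => fun _ => 0
  end.

Definition lie (x y : B -> K) : B -> K :=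
  fun d => \sum_(b : B) \sum_(c : B) x b * y c * brB b c d.

(* Λ² n(G) is represented by alternating 2-tensors  B -> B -> K, with
   a ∧ b := a ⊗ b - b ⊗ a. *)
Definition wedge (u v : B -> K) : B -> B -> K :=
  fun b c => u b * v c - u c * v b.

(* ad_x (a ∧ b) = [x,a] ∧ b + a ∧ [x,b], extended linearly (via the
   derivation action ad_x ⊗ 1 + 1 ⊗ ad_x on tensors). *)
Definition ad2 (x : B -> K) (w : B -> B -> K) : B -> B -> K :=
  fun b c => \sum_(d : B) (w d c * lie x (delta d) b + w b d * lie x (delta d) c).

Definition omegaW (lam : 'I_n -> edgeT adj -> K) : B -> B -> K :=
  fun b c => \sum_(e : 'I_n) \sum_(a : edgeT adj)
               lam e a * wedge (delta (inl e)) (delta (inr a)) b c.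

Definition invariant2 (w : B -> B -> K) : Prop :=
  forall x : B -> K, ad2 x w = (fun _ _ => 0).

End GraphAlgebra.

(* Main.v *)
Require Import Defs.
From HB Require Import structures.
From mathcomp Require Import all_boot all_order all_algebra.
Import GRing.Theory.
Local Open Scope ring_scope.
Lemma sum_delta (K : fieldType) (T : finType) (x : T) (F : T -> K) :
  \sum_b (if b == x then 1 else 0) * F b = F x.
Proof.
rewrite (bigD1 x) //= eqxx mul1r big1 ?addr0 // => b /negbTE ->; by rewrite mul0r.
Qed.
Lemma sum_delta' (K : fieldType) (T : finType) (x : T) (F : T -> K) :
  \sum_b (if x == b then 1 else 0) * F b = F x.
Proof.
by under eq_bigr do rewrite eq_sym; rewrite sum_delta.
Qed.
Lemma inlE (T1 T2 : eqType) (a b : T1) : (inl a == inl b :> T1 + T2) = (a == b).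
Proof. by []. Qed.
Lemma inrE (T1 T2 : eqType) (a b : T2) : (inr a == inr b :> T1 + T2) = (a == b).
Proof. by []. Qed.
Lemma lie_delta (K : fieldType) n (adj : rel 'I_n) f d b :
  lie (delta K (inl f)) (delta K d) b = brB K (adj:=adj) (inl f) d b.
Proof.
rewrite /lie /delta.
under eq_bigr do under eq_bigr do rewrite -mulrA.
under eq_bigr do rewrite -mulr_sumr sum_delta.
by rewrite sum_delta.
Qed.
Lemma om1 (K : fieldType) n (adj : rel 'I_n) (lam : 'I_n -> edgeT adj -> K) j g :
  omegaW lam (inl j) (inr g) = lam j g.
Proof.
rewrite /omegaW /wedge /delta /=.
under eq_bigr do under eq_bigr do rewrite mulr0 subr0 mulrC inlE inrE -mulrA.
under eq_bigr do rewrite -mulr_sumr sum_delta'.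
by rewrite sum_delta'.
Qed.
Lemma om2 (K : fieldType) n (adj : rel 'I_n) (lam : 'I_n -> edgeT adj -> K) j g :
  omegaW lam (inr g) (inl j) = - lam j g.
Proof.
rewrite /omegaW /wedge /delta /=.
under eq_bigr do under eq_bigr do rewrite mul0r sub0r mulrN mulrC inlE inrE [X in X * _]mulrC -mulrA.
under eq_bigr do rewrite sumrN sum_delta'.
by rewrite sumrN sum_delta'.
Qed.
Definition Tf (K : fieldType) n (adj : rel 'I_n) (f : 'I_n) (b : edgeT adj) (g : 'I_n -> K) : K :=
  if (val b).1 == f then g (val b).2 else if (val b).2 == f then - g (val b).1 else 0.
Arguments Tf {K n adj}.
Lemma brB_vv (K : fieldType) n (adj : rel 'I_n) f j (b : edgeT adj) :
  brB K (inl f) (inl j) (inr b) = if val b == (f,j) then 1 else if val b == (j,f) then -1 else 0.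
Proof. by []. Qed.
Lemma brB_ve (K : fieldType) n (adj : rel 'I_n) f (a : edgeT adj) x :
  brB K (inl f) (inr a) x = 0.
Proof. by []. Qed.
Lemma sumT (K : fieldType) n (adj : rel 'I_n) f (b : edgeT adj) (g : 'I_n -> K) :
  \sum_j g j * (if val b == (f,j) then 1 else if val b == (j,f) then -1 else 0) = Tf f b g.
Proof.
case: b => [[p q] h]; have /andP [hpq _] := h; rewrite /Tf /=.
case: (eqVneq p f) => [<-|hpf].
  have hqp : (q == p) = false by apply/negbTE; rewrite neq_ltn hpq orbT.
  under eq_bigr do rewrite !xpair_eqE eqxx hqp andbF /= mulrC.
  by rewrite sum_delta'.
under eq_bigr do rewrite !xpair_eqE (negbTE hpf) /=.
case: (q == f).
  under eq_bigr do rewrite andbT mulrC.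
  rewrite (eq_bigr (fun j => - ((if p == j then 1 else 0) * g j))); last first.
    by move=> j _; case: (p == j); rewrite ?mulN1r ?mul0r ?oppr0 ?mul1r.
  by rewrite sumrN sum_delta'.
under eq_bigr do rewrite andbF mulr0.
by rewrite big1.
Qed.
Lemma entry (K : fieldType) n (adj : rel 'I_n) (lam : 'I_n -> edgeT adj -> K) f b c :
  ad2 (delta K (inl f)) (omegaW lam) (inr b) (inr c) =
  Tf f b (fun j => lam j c) - Tf f c (fun j => lam j b).
Proof.
rewrite /ad2; under eq_bigr do rewrite !lie_delta.
rewrite big_sumType /=.
rewrite [X in _ + X]big1; last by move=> a _; rewrite !mulr0 addr0.
rewrite addr0 big_split /= -!sumT.
under eq_bigr do rewrite om1.
under [X in _ + X]eq_bigr do rewrite om2 mulNr.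
by rewrite sumrN.
Qed.
From mathcomp Require Import ring.
Lemma mk_edge n (adj : rel 'I_n) (i j : 'I_n) : (i < j)%N -> adj i j ->
  {b : edgeT adj | val b = (i,j)}.
Proof. move=> h1 h2. by exists (exist _ (i,j) (introT andP (conj h1 h2))). Qed.

Arguments mk_edge {n adj i j}.
Lemma char0_2 (K : fieldType) (hK : [pchar K] =i pred0) (x : K) : x *+ 2 = 0 -> x = 0.
Proof.
move/eqP; rewrite -mulr_natr mulf_eq0 ((pcharf0P K).1 hK 2) orbF.
by move/eqP.
Qed.

Theorem mainTheorem9 (K : fieldType) (hK : [pchar K] =i pred0)
  (n : nat) (adj : rel 'I_n)
  (hG : simple_graph adj) (hiso : no_isolated adj)
  (lam : 'I_n -> edgeT adj -> K) :
  invariant2 (omegaW lam) ->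
  forall (e : 'I_n) (a : edgeT adj), (2 <= degree adj e)%N -> lam e a = 0.
Proof.
move=> H e a hdeg.
have E : forall f b c, Tf f b (fun j => lam j c) - Tf f c (fun j => lam j b) = 0.
  move=> f b c; rewrite -entry.
  exact: (congr1 (fun w => w (inr b) (inr c)) (H (delta K (inl f)))).
case: hG => [hirr hsym].
have neq_adj : forall i j, adj i j -> (i == j) = false.
  by move=> i j hij; apply/negbTE; apply: contraTneq hij => ->; exact: hirr.
have neq_adj' : forall i j, adj i j -> (j == i) = false.
  by move=> i j hij; rewrite eq_sym neq_adj.
case ha: (val a) => [u v].
have /andP [huv hadjuv] : ((val a).1 < (val a).2)%N && adj (val a).1 (val a).2 := valP a.
rewrite ha /= in huv hadjuv.
have huv' : (u == v) = false by apply: neq_adj.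
have hvu' : (v == u) = false by apply: neq_adj'.
have case1 : forall f, adj e f -> f != u -> f != v -> lam e a = 0.
  move=> f hef hfu hfv.
  have hef' := neq_adj _ _ hef; have hfe' := neq_adj' _ _ hef.
  have hfe : adj f e by rewrite hsym.
  case: (ltngtP e f) => hlt.
  - have [b hb] := mk_edge hlt hef.
    have := E f b a; rewrite /Tf hb ha /= hef' eqxx.
    rewrite [u == f]eq_sym (negbTE hfu) [v == f]eq_sym (negbTE hfv) subr0.
    by move/eqP; rewrite oppr_eq0 => /eqP.
  - have [b hb] := mk_edge hlt hfe.
    have := E f b a; rewrite /Tf hb ha /= eqxx.
    by rewrite [u == f]eq_sym (negbTE hfu) [v == f]eq_sym (negbTE hfv) subr0.
  - by move: hef'; rewrite (val_inj hlt) eqxx.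
have : (1 < #|[set j | adj e j]|)%N by [].
move/card_gt1P => [j1 [j2 [hj1 hj2 hj12]]].
rewrite !inE in hj1 hj2.
case: (boolP ((j1 != u) && (j1 != v))) => [/andP [h1 h2]|n1]; first exact: (case1 j1 hj1 h1 h2).
case: (boolP ((j2 != u) && (j2 != v))) => [/andP [h1 h2]|n2]; first exact: (case1 j2 hj2 h1 h2).
rewrite !negb_and !negbK in n1 n2.
have [heu hev] : adj e u /\ adj e v.
  by move: n2 n1; case/orP => /eqP h2; case/orP => /eqP h1; subst; rewrite ?eqxx in hj12 *; split.
have heu' := neq_adj _ _ heu; have hue' := neq_adj' _ _ heu.
have hev' := neq_adj _ _ hev; have hve' := neq_adj' _ _ hev.
have hue : adj u e by rewrite hsym.
have hve : adj v e by rewrite hsym.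
apply: char0_2 => //.
case: (ltngtP e u) => heu_lt.
- have [b1 hb1] := mk_edge heu_lt heu.
  have hev_lt : (e < v)%N by apply: ltn_trans heu_lt huv.
  have [b2 hb2] := mk_edge hev_lt hev.
  have hA := E u b1 a; have hB := E v b2 a; have hC := E e b1 b2.
  rewrite /Tf ?hb1 ?hb2 ?ha /= ?eqxx ?heu' ?hue' ?hev' ?hve' ?huv' ?hvu' in hA hB hC.
  transitivity (- 0 - 0 + 0 : K); last by rewrite oppr0 !addr0.
  rewrite -{1}hA -{1}hB -{1}hC; ring.
- have [b1 hb1] := mk_edge heu_lt hue.
  case: (ltngtP e v) => hev_lt.
  + have [b2 hb2] := mk_edge hev_lt hev.
    have hA := E u b1 a; have hB := E v b2 a; have hC := E e b1 b2.
    rewrite /Tf ?hb1 ?hb2 ?ha /= ?eqxx ?heu' ?hue' ?hev' ?hve' ?huv' ?hvu' in hA hB hC.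
    transitivity (0 - 0 - 0 : K); last by rewrite !subr0.
    rewrite -{1}hA -{1}hB -{1}hC; ring.
  + have [b2 hb2] := mk_edge hev_lt hve.
    have hA := E u b1 a; have hB := E v b2 a; have hC := E e b1 b2.
    rewrite /Tf ?hb1 ?hb2 ?ha /= ?eqxx ?heu' ?hue' ?hev' ?hve' ?huv' ?hvu' in hA hB hC.
    transitivity (0 + 0 + 0 : K); last by rewrite !addr0.
    rewrite -{1}hA -{1}hB -{1}hC; ring.
  + by move: hev'; rewrite (val_inj hev_lt) eqxx.
- by move: heu'; rewrite (val_inj heu_lt) eqxx.
Qed.
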